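(* For every $s\in(0,1]$ there exist $\rho>0$ and a von Mangoldt plane $M_m$ such that $m'(r)=s$ for all $r\in[\rho,\infty)$.
   Context: For a smooth function $m\colon[0,\infty)\to[0,\infty)$ with $m(0)=0$, $m'(0)=1$, $m>0$ on $(0,\infty)$ and whose odd extension to $\mathbb R$ is smooth, $M_m$ is $\mathbb R^2$ with the complete smooth metric $dr^2+m(r)^2d\theta^2$ in polar coordinates, curvature $G_m=-m''/m$; $M_m$ is a von Mangoldt plane if $G_m$ is a non-increasing function of $r$. *)

(* Defs.v *)
From Stdlib Require Import Reals.
From Coquelicot Require Import Coquelicot.
Open Scope R_scope.

Definition smooth (f : R -> R) : Prop :=
  forall (n : nat) (x : R), ex_derive (Derive_n f n) x.

Definition odd_fun (f : R -> R) : Prop := forall x : R, f (- x) = - f x.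

Definition curvature (m : R -> R) (r : R) : R := - Derive_n m 2 r / m r.

(* m is given through its odd extension to R; its restriction to [0,oo)
   is the warping function of M_m. *)
Definition warping_function (m : R -> R) : Prop :=
  smooth m /\ odd_fun m /\ m 0 = 0 /\ Derive m 0 = 1 /\
  (forall r : R, 0 < r -> 0 < m r).

(* von Mangoldt plane: G_m non-increasing in r (on (0,oo); by continuity of
   the smooth function -m''/m this is the same as on [0,oo)). *)
Definition von_mangoldt (m : R -> R) : Prop :=
  warping_function m /\
  (forall x y : R, 0 < x -> x <= y -> curvature m y <= curvature m x).

(* Main.v *)
Require Import Defs.
From Stdlib Require Import Reals Lra ClassicalEpsilon.
From Coquelicot Require Import Coquelicot.
Open Scope R_scope.
Lemma dplus f g x a b : is_derive f x a -> is_derive g x b -> is_derive (fun t => f t + g t) x (a+b).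
Proof. intros; exact (is_derive_plus f g x a b H H0). Qed.
Lemma dmult f g x a b : is_derive f x a -> is_derive g x b -> is_derive (fun t => f t * g t) x (a * g x + f x * b).
Proof. intros; exact (is_derive_mult f g x a b H H0 Rmult_comm). Qed.
Lemma dcomp f g x a b : is_derive f (g x) a -> is_derive g x b -> is_derive (fun t => f (g t)) x (b * a).
Proof. intros; exact (is_derive_comp f g x a b H H0). Qed.
Lemma dconst c x : is_derive (fun _ => c) x 0.
Proof. exact (is_derive_const c x). Qed.
Lemma dval (f : R -> R) (x l l' : R) : is_derive f x l -> l = l' -> is_derive f x l'.
Proof. intros H E; subst; exact H. Qed.
Lemma did x : is_derive (fun t => t) x 1.
Proof. exact (is_derive_id x). Qed.

Fixpoint nsm (n : nat) (f : R -> R) : Prop :=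
  match n with
  | O => True
  | S n => exists g, (forall x, is_derive f x (g x)) /\ nsm n g
  end.

Lemma nsm_ext n f g : (forall x, f x = g x) -> nsm n f -> nsm n g.
Proof.
  destruct n as [|n]; simpl; auto.
  intros E [h [Hd Hh]]. exists h; split; auto.
  intros x; apply is_derive_ext with f; auto.
Qed.

Lemma nsm_S n f : nsm (S n) f -> nsm n f.
Proof.
  revert f; induction n as [|n IH]; intros f H; simpl; auto.
  destruct H as [g [Hd Hg]]. exists g; split; auto.
Qed.

Lemma nsm_const n c : nsm n (fun _ => c).
Proof.
  revert c; induction n as [|n IH]; intros c; simpl; auto.
  exists (fun _ => 0); split; auto. intros; apply dconst.
Qed.

Lemma nsm_plus n f g : nsm n f -> nsm n g -> nsm n (fun t => f t + g t).
Proof.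
  revert f g; induction n as [|n IH]; intros f g Hf Hg; simpl; auto.
  destruct Hf as [f' [Df Hf']]; destruct Hg as [g' [Dg Hg']].
  exists (fun t => f' t + g' t); split; auto.
  intros; apply dplus; auto.
Qed.

Lemma nsm_mult n f g : nsm n f -> nsm n g -> nsm n (fun t => f t * g t).
Proof.
  revert f g; induction n as [|n IH]; intros f g Hf Hg; simpl; auto.
  pose proof (nsm_S _ _ Hf) as Hf0. pose proof (nsm_S _ _ Hg) as Hg0.
  destruct Hf as [f' [Df Hf']]; destruct Hg as [g' [Dg Hg']].
  exists (fun t => f' t * g t + f t * g' t); split.
  intros; apply dmult; auto.
  apply nsm_plus; apply IH; auto.
Qed.

Lemma nsm_comp n f g : nsm n f -> nsm n g -> nsm n (fun t => f (g t)).
Proof.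
  revert f g; induction n as [|n IH]; intros f g Hf Hg; simpl; auto.
  pose proof (nsm_S _ _ Hg) as Hg0.
  destruct Hf as [f' [Df Hf']]; destruct Hg as [g' [Dg Hg']].
  exists (fun t => g' t * f' (g t)); split.
  intros; apply dcomp; auto.
  apply nsm_mult; auto.
Qed.

Lemma nsm_inv n f : (forall x, f x <> 0) -> nsm n f -> nsm n (fun t => / f t).
Proof.
  intros Hnz; revert f Hnz; induction n as [|n IH]; intros f Hnz Hf; simpl; auto.
  pose proof (nsm_S _ _ Hf) as Hf0.
  destruct Hf as [f' [Df Hf']].
  exists (fun t => - f' t * (/ f t * / f t)); split.
  intros x. eapply dval. apply is_derive_inv; [apply Df|apply Hnz].
  specialize (Hnz x). field; auto.
  apply nsm_mult. apply nsm_ext with (fun t => (-1) * f' t). intros; ring.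
  apply nsm_mult; auto. apply nsm_const.
  apply nsm_mult; apply IH; auto.
Qed.

Lemma nsm_id n : nsm n (fun t => t).
Proof.
  destruct n; simpl; auto. exists (fun _ => 1); split. intros; apply did. apply nsm_const.
Qed.

Lemma nsm_smooth f : (forall n, nsm n f) -> smooth f.
Proof.
  intros H n. revert f H. induction n as [|n IH]; intros f H x.
  - destruct (H 1%nat) as [g [Dg _]]. simpl. exists (g x); apply Dg.
  - assert (Hg : forall k, nsm k (Derive f)).
    { intros k. destruct (H (S k)) as [g [Dg Hg]]. apply nsm_ext with g; auto.
      intros t; symmetry; apply is_derive_unique; apply Dg. }
    apply ex_derive_ext with (Derive_n (Derive f) n).
    intros t. change (Derive f) with (Derive_n f 1). rewrite (Derive_n_comp f n 1 t). rewrite Nat.add_1_r. reflexivity.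
    apply IH; auto.
Qed.

Definition E (k : nat) (u : R) : R :=
  match Rlt_dec 0 u with left _ => (/u)^k * exp (- / u) | right _ => 0 end.

Lemma E_pos k u : 0 < u -> E k u = (/u)^k * exp (- / u).
Proof. intros H; unfold E; destruct (Rlt_dec 0 u); [reflexivity|lra]. Qed.
Lemma E_npos k u : u <= 0 -> E k u = 0.
Proof. intros H; unfold E; destruct (Rlt_dec 0 u); [lra|reflexivity]. Qed.
Lemma E_ge0 k u : 0 <= E k u.
Proof.
  destruct (Rlt_dec 0 u) as [H|H].
  - rewrite E_pos by auto. apply Rmult_le_pos. apply pow_le. left; apply Rinv_0_lt_compat; auto.
    left; apply exp_pos.
  - rewrite E_npos by lra. lra.
Qed.

Lemma exp_ge_pow z N : 0 <= z -> z ^ N / INR (Factorial.fact N) <= exp z.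
Proof.
  intros Hz. pose proof (exp_ge_taylor z N Hz) as H.
  destruct N as [|M].
  - simpl in H |- *. lra.
  - simpl sum_f_R0 in H.
    assert (0 <= sum_f_R0 (fun k => z ^ k / INR (Factorial.fact k)) M).
    { apply cond_pos_sum. intros n. apply Rmult_le_pos. apply pow_le; auto.
      left; apply Rinv_0_lt_compat, INR_fact_lt_0. }
    simpl; lra.
Qed.

Lemma E_deriv0 k : is_derive (E k) 0 0.
Proof.
  apply is_derive_Reals. intros eps Heps.
  set (C := INR (Factorial.fact (S (S k)))).
  assert (HC : 0 < C) by apply INR_fact_lt_0.
  assert (Hd : 0 < eps / C) by (apply Rdiv_lt_0_compat; auto).
  exists (mkposreal _ Hd). intros h Hh0 Hh. simpl in Hh.
  rewrite (E_npos k 0) by lra. rewrite Rplus_0_l.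
  destruct (Rlt_dec 0 h) as [Hp|Hn].
  - rewrite E_pos by auto.
    set (z := / h).
    assert (Hz : 0 < z) by (apply Rinv_0_lt_compat; auto).
    pose proof (exp_ge_pow z (S (S k)) (Rlt_le _ _ Hz)) as He. fold C in He.
    assert (Hzp : 0 < z ^ (S k)) by (apply pow_lt; auto).
    assert (Hexp : 0 < exp (- z)) by apply exp_pos.
    replace ((z ^ k * exp (- z) - 0) / h - 0) with (z ^ (S k) * exp (- z)).
    2:{ unfold z; simpl. field. lra. }
    rewrite Rabs_right by (apply Rle_ge; left; apply Rmult_lt_0_compat; auto).
    rewrite exp_Ropp.
    assert (Hez : 0 < exp z) by apply exp_pos.
    apply Rle_lt_trans with (C * h).
    + apply Rmult_le_reg_r with (exp z); auto.
      rewrite Rmult_assoc, Rinv_l by lra. rewrite Rmult_1_r.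
      apply Rmult_le_reg_l with (/ C). apply Rinv_0_lt_compat; auto.
      apply Rle_trans with (h * exp z); [| right; field; lra].
      apply Rle_trans with (h * (z ^ (S (S k)) / C)).
      * right. unfold z. simpl. field. split; lra.
      * apply Rmult_le_compat_l; lra.
    + rewrite Rabs_right in Hh by lra.
      apply Rmult_lt_reg_l with (/ C). apply Rinv_0_lt_compat; auto.
      replace (/ C * (C * h)) with h by (field; lra).
      replace (/ C * eps) with (eps / C) by (unfold Rdiv; ring). auto.
  - rewrite E_npos by lra.
    replace ((0 - 0) / h - 0) with 0 by (field; auto). rewrite Rabs_R0; auto.
Qed.

Lemma loc_pos (x : R) (P : R -> Prop) : 0 < x -> (forall y, 0 < y -> P y) -> locally x P.
Proof.
  intros Hx HP. exists (mkposreal x Hx). intros y Hy.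
  change (Rabs (y - x) < x) in Hy. apply HP.
  apply Rabs_def2 in Hy. lra.
Qed.
Lemma loc_neg (x : R) (P : R -> Prop) : x < 0 -> (forall y, y < 0 -> P y) -> locally x P.
Proof.
  intros Hx HP. assert (H : 0 < - x) by lra. exists (mkposreal _ H). intros y Hy.
  change (Rabs (y - x) < - x) in Hy. apply HP.
  apply Rabs_def2 in Hy. lra.
Qed.

Lemma E_deriv k x : is_derive (E k) x (- INR k * E (S k) x + E (S (S k)) x).
Proof.
  destruct (Rtotal_order x 0) as [Hn|[H0|Hp]].
  - rewrite !E_npos by lra.
    apply is_derive_ext_loc with (fun _ => 0).
    apply loc_neg; auto. intros y Hy. rewrite E_npos by lra; auto.
    eapply dval. apply dconst. ring.
  - subst. rewrite !E_npos by lra. eapply dval. apply E_deriv0. ring.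
  - rewrite !E_pos by auto.
    apply is_derive_ext_loc with (fun u => (/u)^k * exp (- / u)).
    apply loc_pos; auto. intros y Hy. rewrite E_pos by lra; auto.
    auto_derive. split; lra.
    destruct k as [|j].
    + cbn [pow Nat.pred INR]. field. lra.
    + cbn [pow Nat.pred]. rewrite S_INR. field. lra.
Qed.

Lemma nsm_E n : forall k, nsm n (E k).
Proof.
  induction n as [|n IH]; intros k; simpl; auto.
  exists (fun x => - INR k * E (S k) x + E (S (S k)) x). split.
  intros; apply E_deriv.
  apply nsm_plus; auto. apply nsm_mult; auto. apply nsm_const.
Qed.

Lemma cont_of_deriv (f : R -> R) x l : is_derive f x l -> continuity_pt f x.
Proof. intros H. apply derivable_continuous_pt. exists l. apply is_derive_Reals; auto. Qed.

Lemma mono_nonpos (f df : R -> R) a b : a <= b ->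
  (forall x, a <= x <= b -> is_derive f x (df x)) ->
  (forall x, a <= x <= b -> df x <= 0) -> f b <= f a.
Proof.
  intros Hab Hd Hn.
  destruct (MVT_gen f a b df) as [c [Hc Heq]].
  - intros x Hx. rewrite Rmin_left, Rmax_right in Hx by lra. apply Hd; lra.
  - intros x Hx. rewrite Rmin_left, Rmax_right in Hx by lra. eapply cont_of_deriv; apply Hd; lra.
  - rewrite Rmin_left, Rmax_right in Hc by lra.
    assert (df c * (b - a) <= 0). { apply Rmult_le_0_r. apply Hn; lra. lra. } 
    lra.
Qed.

Lemma mono_nonneg (f df : R -> R) a b : a <= b ->
  (forall x, a <= x <= b -> is_derive f x (df x)) ->
  (forall x, a <= x <= b -> 0 <= df x) -> f a <= f b.
Proof.
  intros Hab Hd Hn.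
  assert (- f b <= - f a); [|lra].
  apply (mono_nonpos (fun x => - f x) (fun x => - df x) a b Hab).
  - intros x Hx. eapply dval. apply (is_derive_opp f x (df x)), Hd; auto. reflexivity.
  - intros x Hx. specialize (Hn x Hx). lra.
Qed.

Lemma E0_mono u v : u <= v -> E 0 u <= E 0 v.
Proof.
  intros H. destruct (Rle_dec u 0) as [Hu|Hu].
  - rewrite (E_npos 0 u Hu). apply E_ge0.
  - rewrite !E_pos by lra. simpl. rewrite !Rmult_1_l.
    destruct (Req_dec u v) as [->|Hne]; [lra|].
    left. apply exp_increasing. apply Ropp_lt_contravar. apply Rinv_lt_contravar.
    apply Rmult_lt_0_compat; lra. lra.
Qed.

Lemma w2exp_mono a b : 2 <= a <= b -> b ^ 2 * exp (- b) <= a ^ 2 * exp (- a).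
Proof.
  intros [Ha Hab].
  apply (mono_nonpos (fun w => w ^ 2 * exp (- w)) (fun w => (2 * w - w ^ 2) * exp (- w)) a b Hab).
  - intros x Hx. auto_derive; auto. ring.
  - intros x Hx. apply Rmult_le_0_r. nra. left; apply exp_pos.
Qed.

Lemma E2_mono u v : u <= v -> v <= 1/2 -> E 2 u <= E 2 v.
Proof.
  intros H Hv. destruct (Rle_dec u 0) as [Hu|Hu].
  - rewrite (E_npos 2 u Hu). apply E_ge0.
  - rewrite !E_pos by lra.
    apply w2exp_mono. split.
    + apply Rmult_le_reg_r with v; [lra|]. rewrite Rinv_l by lra. lra.
    + apply Rinv_le_contravar; lra.
Qed.

Definition bb (s : R) : R := (/ s - 1) / exp (-2).
Definition p (s x : R) : R := / s - bb s * E 0 (1/2 - x * x).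

Lemma E0_half : E 0 (1/2) = exp (-2).
Proof. rewrite E_pos by lra. simpl. replace (- / (1/2)) with (-2) by field. ring. Qed.

Lemma bb_ge0 s : 0 < s <= 1 -> 0 <= bb s.
Proof.
  intros Hs. unfold bb. apply Rmult_le_pos.
  assert (1 <= / s). { rewrite <- Rinv_1. apply Rinv_le_contravar; lra. } lra.
  left; apply Rinv_0_lt_compat, exp_pos.
Qed.

Lemma p0 s : 0 < s <= 1 -> p s 0 = 1.
Proof.
  intros Hs. unfold p, bb. replace (1/2 - 0*0) with (1/2) by ring. rewrite E0_half.
  field; repeat split; try lra; apply Rgt_not_eq, exp_pos.
Qed.

Lemma p_bounds s x : 0 < s <= 1 -> 1 <= p s x <= / s.
Proof.
  intros Hs. pose proof (bb_ge0 s Hs). unfold p.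
  pose proof (E_ge0 0 (1/2 - x * x)).
  assert (E 0 (1/2 - x*x) <= exp (-2)). { rewrite <- E0_half. apply E0_mono. nra. }
  split.
  - apply Rle_trans with (/ s - bb s * exp (-2)).
    + right. unfold bb. field; repeat split; try lra; apply Rgt_not_eq, exp_pos.
    + apply Rplus_le_compat_l, Ropp_le_contravar, Rmult_le_compat_l; auto.
  - assert (0 <= bb s * E 0 (1/2 - x*x)) by (apply Rmult_le_pos; auto). lra.
Qed.

Lemma p_pos s x : 0 < s <= 1 -> 0 < p s x.
Proof. intros Hs. pose proof (p_bounds s x Hs). lra. Qed.

Lemma p_far s x : 1/2 <= x * x -> p s x = / s.
Proof. intros H. unfold p. rewrite E_npos by lra. ring. Qed.

Lemma p_even s x : p s (- x) = p s x.
Proof. unfold p. f_equal. f_equal. f_equal. ring. Qed.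

Lemma p_mono s x y : 0 < s <= 1 -> 0 <= x <= y -> p s x <= p s y.
Proof.
  intros Hs Hxy. unfold p. pose proof (bb_ge0 s Hs).
  assert (E 0 (1/2 - y*y) <= E 0 (1/2 - x*x)) by (apply E0_mono; nra).
  assert (bb s * E 0 (1/2 - y*y) <= bb s * E 0 (1/2 - x*x)) by (apply Rmult_le_compat_l; auto).
  lra.
Qed.

Lemma p_alt (s t : R) : / s + - bb s * E 0 (1/2 + -1 * (t*t)) = / s - bb s * E 0 (1/2 - t*t).
Proof. replace (1/2 + -1*(t*t)) with (1/2 - t*t) by ring. ring. Qed.

Definition dp (s x : R) : R := bb s * (2 * x) * E 2 (1/2 - x * x).

Lemma p_deriv s x : is_derive (p s) x (dp s x).
Proof.
  unfold p, dp.
  apply is_derive_ext with (fun x => / s + (- bb s) * E 0 (1/2 + (-1) * (x * x))).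
  { intros t. apply p_alt. }
  eapply dval.
  apply dplus. apply dconst.
  apply (is_derive_scal (fun x => E 0 (1/2 + (-1) * (x*x))) x (- bb s)).
  apply dcomp. apply E_deriv.
  apply dplus. apply dconst. apply (is_derive_scal (fun x => x * x) x (-1)).
  apply dmult; apply did.
  simpl. match goal with |- ?a = ?b => change (@eq R a b) end. replace (1/2 + -1*(x*x)) with (1/2 - x*x) by ring. ring.
Qed.

Lemma nsm_p n s : nsm n (p s).
Proof.
  unfold p. apply nsm_ext with (fun x => / s + (- bb s) * E 0 (1/2 + (-1) * (x * x))).
  intros x. ring_simplify (1/2 + -1 * (x*x)). replace (1/2 - x*x) with (1/2 - x^2) by ring. ring.
  apply nsm_plus. apply nsm_const. apply nsm_mult. apply nsm_const.
  apply nsm_comp. apply nsm_E.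
  apply nsm_plus. apply nsm_const. apply nsm_mult. apply nsm_const. apply nsm_mult; apply nsm_id.
Qed.

Ltac Req := match goal with |- ?a = ?b => change (@eq R a b) end.

Lemma p_cont s x : continuous (p s) x.
Proof. exact (ex_derive_continuous (p s) x (ex_intro _ (dp s x) (p_deriv s x))). Qed.

Definition F (s x : R) : R := RInt (p s) 0 x.

Lemma F_deriv s x : is_derive (F s) x (p s x).
Proof.
  apply is_derive_RInt with 0.
  apply filter_forall. intros y. unfold F.
  exact (@RInt_correct R_CompleteNormedModule (p s) 0 y
     (@ex_RInt_continuous R_CompleteNormedModule (p s) 0 y (fun z _ => p_cont s z))).
  apply p_cont.
Qed.

Lemma F0 s : F s 0 = 0.
Proof. unfold F. exact (@RInt_point R_CompleteNormedModule 0 (p s)). Qed.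

Lemma F_mvt s x y : 0 < s <= 1 -> x <= y -> y - x <= F s y - F s x <= (y - x) / s.
Proof.
  intros Hs Hxy.
  destruct (MVT_gen (F s) x y (p s)) as [c [Hc Heq]].
  - intros; apply F_deriv.
  - intros; eapply cont_of_deriv; apply F_deriv.
  - rewrite Heq. pose proof (p_bounds s c Hs). split.
    + rewrite <- (Rmult_1_l (y - x)) at 1. apply Rmult_le_compat_r; lra.
    + unfold Rdiv. rewrite Rmult_comm. apply Rmult_le_compat_l; lra.
Qed.

Lemma dopp_id (x : R) : is_derive (fun t : R => - t) x (-1).
Proof. auto_derive; auto; ring. Qed.

Lemma F_odd s y : 0 < s <= 1 -> F s (- y) = - F s y.
Proof.
  intros Hs.
  set (H := fun y => F s (- y) + F s y).
  assert (Hd : forall t, is_derive H t 0).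
  { intros t. unfold H. eapply dval. apply dplus.
    apply (dcomp (F s) (fun t => - t)). apply F_deriv.
    apply dopp_id.
    apply F_deriv. rewrite p_even. simpl. Req. ring. }
  assert (H0 : H 0 = 0). { unfold H. rewrite Ropp_0, F0. ring. }
  assert (H y = 0).
  { destruct (Rle_dec 0 y).
    - pose proof (mono_nonpos H (fun _ => 0) 0 y r (fun x _ => Hd x) (fun _ _ => Rle_refl 0)).
      pose proof (mono_nonneg H (fun _ => 0) 0 y r (fun x _ => Hd x) (fun _ _ => Rle_refl 0)).
      lra.
    - assert (y <= 0) by lra.
      pose proof (mono_nonpos H (fun _ => 0) y 0 H1 (fun x _ => Hd x) (fun _ _ => Rle_refl 0)).
      pose proof (mono_nonneg H (fun _ => 0) y 0 H1 (fun x _ => Hd x) (fun _ _ => Rle_refl 0)).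
      lra. }
  unfold H in H1. lra.
Qed.

Lemma F_cont s : continuity (F s).
Proof. intros x. eapply cont_of_deriv. apply F_deriv. Qed.

Lemma F_surj s r : 0 < s <= 1 -> exists y, F s y = r.
Proof.
  intros Hs.
  pose proof (F_mvt s 0 (Rabs r) Hs (Rabs_pos r)).
  pose proof (F_mvt s (- Rabs r) 0 Hs ltac:(pose proof (Rabs_pos r); lra)).
  rewrite F0 in *.
  assert (Hr : - Rabs r <= r <= Rabs r).
  { pose proof (Rle_abs (- r)) as Ha. rewrite Rabs_Ropp in Ha. pose proof (Rle_abs r). lra. }
  destruct (IVT_gen (F s) (- Rabs r) (Rabs r) r (F_cont s)) as [y [_ Hy]].
  - rewrite Rmin_left, Rmax_right; lra.
  - exists y; auto.
Qed.

Definition m (s r : R) : R := epsilon (inhabits 0) (fun y => F s y = r).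

Lemma Fm s r : 0 < s <= 1 -> F s (m s r) = r.
Proof. intros Hs. unfold m. apply epsilon_spec. apply F_surj; auto. Qed.

Lemma F_le_inv s x y : 0 < s <= 1 -> F s x <= F s y -> x <= y.
Proof.
  intros Hs H. destruct (Rle_dec x y); auto.
  pose proof (F_mvt s y x Hs ltac:(lra)). lra.
Qed.

Lemma m_mono s x y : 0 < s <= 1 -> x <= y -> m s x <= m s y.
Proof. intros Hs H. apply (F_le_inv s); auto. rewrite !Fm; auto. Qed.

Lemma m_lip s x y : 0 < s <= 1 -> x <= y -> m s y - m s x <= y - x.
Proof.
  intros Hs H. pose proof (F_mvt s (m s x) (m s y) Hs (m_mono s x y Hs H)).
  rewrite !Fm in H0; auto. lra.
Qed.

Lemma m_F s y : 0 < s <= 1 -> m s (F s y) = y.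
Proof.
  intros Hs. apply Rle_antisym; apply (F_le_inv s); auto; rewrite Fm; auto; lra.
Qed.

Lemma m0 s : 0 < s <= 1 -> m s 0 = 0.
Proof. intros Hs. rewrite <- (F0 s) at 1. apply m_F; auto. Qed.

Lemma m_odd s r : 0 < s <= 1 -> m s (- r) = - m s r.
Proof.
  intros Hs. rewrite <- (Fm s r Hs) at 1. rewrite <- F_odd; auto. apply m_F; auto.
Qed.

Lemma m_lower s r : 0 < s <= 1 -> 0 <= r -> s * r <= m s r.
Proof.
  intros Hs Hr.
  assert (0 <= m s r) by (rewrite <- (m0 s Hs); apply m_mono; auto).
  pose proof (F_mvt s 0 (m s r) Hs H). rewrite Fm, F0 in H0; auto.
  destruct H0 as [_ H0]. apply Rmult_le_reg_r with (/ s). apply Rinv_0_lt_compat; lra.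
  replace (s * r * / s) with r by (field; lra). lra.
Qed.

Lemma m_pos s r : 0 < s <= 1 -> 0 < r -> 0 < m s r.
Proof.
  intros Hs Hr. pose proof (m_lower s r Hs (Rlt_le _ _ Hr)).
  assert (0 < s * r) by (apply Rmult_lt_0_compat; lra). lra.
Qed.

Lemma m_cont s r : 0 < s <= 1 -> continuity_pt (m s) r.
Proof.
  intros Hs. unfold continuity_pt, continue_in, limit1_in, limit_in. simpl. unfold R_dist.
  intros eps He. exists eps. split; auto. intros x [_ Hx].
  destruct (Rle_dec r x).
  - pose proof (m_lip s r x Hs r0). pose proof (m_mono s r x Hs r0).
    rewrite Rabs_right in * by lra. lra.
  - assert (x <= r) by lra.
    pose proof (m_lip s x r Hs H). pose proof (m_mono s x r Hs H).
    rewrite Rabs_left1 in * by lra. lra.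
Qed.

Definition Fpr s a : derivable_pt (F s) a :=
  exist _ (p s a) (proj1 (is_derive_Reals (F s) a (p s a)) (F_deriv s a)).

Lemma m_deriv s r : 0 < s <= 1 -> is_derive (m s) r (/ p s (m s r)).
Proof.
  intros Hs. apply is_derive_Reals.
  assert (Hincr : m s (r - 1) <= m s r <= m s (r + 1)) by (split; apply m_mono; lra).
  pose proof (Ranalysis5.derivable_pt_lim_recip_interv (F s) (m s) (r - 1) (r + 1) r
    (fun a _ => Fpr s a) (m_cont s r Hs) ltac:(lra) ltac:(lra) Hincr
    (fun x _ => Fm s x Hs)) as H.
  simpl in H. replace (/ p s (m s r)) with (1 / p s (m s r)) by (unfold Rdiv; ring).
  apply H. pose proof (p_pos s (m s r) Hs). lra.
Qed.

Lemma nsm_m_comp s (Hs : 0 < s <= 1) n : forall P, nsm n P -> nsm n (fun r => P (m s r)).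
Proof.
  induction n as [|n IH]; intros P HP; simpl; auto.
  pose proof (nsm_S _ _ HP) as HP0.
  destruct HP as [P' [DP HP']].
  exists (fun r => / p s (m s r) * P' (m s r)). split.
  - intros x. apply dcomp. apply DP. apply m_deriv; auto.
  - apply (IH (fun y => / p s y * P' y)). apply nsm_mult; auto.
    apply nsm_inv. intros y; pose proof (p_pos s y Hs); lra. apply nsm_p.
Qed.

Lemma m_smooth s : 0 < s <= 1 -> smooth (m s).
Proof.
  intros Hs. apply nsm_smooth. intros n. apply (nsm_m_comp s Hs n (fun y => y)). apply nsm_id.
Qed.

Lemma Derive_m s r : 0 < s <= 1 -> Derive (m s) r = / p s (m s r).
Proof. intros Hs. apply is_derive_unique. apply m_deriv; auto. Qed.

Lemma curv_m s r : 0 < s <= 1 -> 0 < r ->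
  curvature (m s) r = bb s * 2 * E 2 (1/2 - m s r * m s r) / (p s (m s r)) ^ 3.
Proof.
  intros Hs Hr. unfold curvature. simpl.
  assert (Hpz : forall y, p s y <> 0) by (intros y; pose proof (p_pos s y Hs); lra).
  rewrite (Derive_ext (Derive (m s)) (fun t => / p s (m s t))) by (intros; apply Derive_m; auto).
  assert (Hd : is_derive (fun t => / p s (m s t)) r
     (/ p s (m s r) * (- dp s (m s r) / p s (m s r) ^ 2))).
  { apply (dcomp (fun y => / p s y) (m s)). apply is_derive_inv. apply p_deriv. apply Hpz.
    apply m_deriv; auto. }
  rewrite (is_derive_unique (fun t : R => / p s (m s t)) r _ Hd). unfold dp.
  pose proof (m_pos s r Hs Hr). specialize (Hpz (m s r)).
  field. split; lra.
Qed.

Lemma curv_mono s x y : 0 < s <= 1 -> 0 < x -> x <= y -> curvature (m s) y <= curvature (m s) x.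
Proof.
  intros Hs Hx Hxy. rewrite !curv_m by lra.
  pose proof (m_pos s x Hs Hx) as Hmx. pose proof (m_mono s x y Hs Hxy) as Hm.
  set (u := m s x) in *. set (v := m s y) in *.
  pose proof (p_bounds s u Hs). pose proof (p_bounds s v Hs).
  pose proof (p_mono s u v Hs ltac:(lra)).
  pose proof (bb_ge0 s Hs).
  assert (HE : E 2 (1/2 - v*v) <= E 2 (1/2 - u*u)) by (apply E2_mono; nra).
  pose proof (E_ge0 2 (1/2 - v*v)).
  assert (Hp3 : / p s v ^ 3 <= / p s u ^ 3).
  { apply Rinv_le_contravar. apply pow_lt; lra. apply pow_incr; lra. }
  assert (0 <= / p s v ^ 3) by (left; apply Rinv_0_lt_compat, pow_lt; lra).
  unfold Rdiv. apply Rmult_le_compat; try (apply Rmult_le_pos; try apply Rmult_le_pos; lra); auto.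
  apply Rmult_le_compat_l. lra. auto.
Qed.

Theorem theorem1p11 :
  forall s : R, 0 < s <= 1 ->
  exists (rho : R) (m : R -> R),
    0 < rho /\ von_mangoldt m /\
    (forall r : R, rho <= r -> Derive m r = s).
Proof.
  intros s Hs. exists (/ s), (m s). split; [apply Rinv_0_lt_compat; lra|]. split.
  - split.
    + split; [apply m_smooth; auto|]. split; [intros x; apply m_odd; auto|].
      split; [apply m0; auto|]. split.
      * rewrite Derive_m, m0, p0; auto. apply Rinv_1.
      * intros r Hr; apply m_pos; auto.
    + intros x y Hx Hxy. apply curv_mono; auto.
  - intros r Hr. rewrite Derive_m by auto.
    assert (Hr0 : 0 <= r) by (pose proof (Rinv_0_lt_compat s ltac:(lra)); lra).
    pose proof (m_lower s r Hs Hr0).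
    assert (1 <= s * r).
    { apply Rmult_le_compat_l with (r := s) in Hr; [|lra]. rewrite Rinv_r in Hr; lra. }
    rewrite p_far. field; lra. nra.
Qed.
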